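(* Let $p\ge1$ be an integer and consider the $p$-Pass algorithm run with arbitrary orderings of $V$ in each pass. For every $1\le i\le p$, if $|S_i|<k$ then $f(S_i)\ge\big(1-(\tfrac{p}{p+1})^i\big)\mathrm{OPT}$.
   Context: $V$ is a finite ground set with $|V|=n$; $f:2^V\to\mathbb{R}_{\ge0}$ is monotone, submodular and normalized; $f(e\mid Y)=f(Y\cup\{e\})-f(Y)$. $k\le n$ is a positive integer and $\mathrm{OPT}=\max\{f(S):S\subseteq V,|S|\le k\}$. $p$-Pass algorithm (knows $\mathrm{OPT}$): start with $S=\emptyset$; for $i=1,\dots,p$, make a pass over all elements of $V$ (in some order) and add each element $e$ to $S$ if $|S|<k$ and $f(e\mid S)\ge(\frac{p}{p+1})^i\cdot\frac{\mathrm{OPT}}{k}$; return $S$. $S_i$ denotes the set $S$ after the $i$-th pass ($S_0=\emptyset$) and $k_i=|S_i\setminus S_{i-1}|$. *)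

(* Defs.v *)
From HB Require Import structures.
From mathcomp Require Import all_boot all_order all_algebra.
Set Implicit Arguments. Unset Strict Implicit. Unset Printing Implicit Defensive.
Import Order.TTheory GRing.Theory Num.Theory.
Local Open Scope ring_scope.

Section Defs.
Variables (R : realFieldType) (V : finType).
Implicit Types (f : {set V} -> R).

Definition marg f (e : V) (Y : {set V}) : R := f (e |: Y) - f Y.

Definition nonneg_fun f := forall S, 0 <= f S.
Definition normalized f := f set0 = 0.
Definition monotone f := forall A B : {set V}, A \subset B -> f A <= f B.
Definition submodular f :=
  forall (A B : {set V}) (e : V), A \subset B -> e \notin B -> marg f e B <= marg f e A.

(* OPT = max { f S : |S| <= k } (the set0 candidate and f >= 0 make 0 a valid seed). *)
Definition OPT f (k : nat) : R :=
  \big[Num.max/0]_(S : {set V} | (#|S| <= k)%N) f S.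

Definition threshold f (k p i : nat) : R :=
  ((p%:R / (p.+1)%:R) ^+ i) * (OPT f k / k%:R).

Definition pass f (k : nat) (t : R) (s : seq V) (S : {set V}) : {set V} :=
  foldl (fun (T : {set V}) (e : V) => if ((#|T| < k)%N && (t <= marg f e T)) then e |: T else T) S s.

Fixpoint S_after f (k p : nat) (ord : nat -> seq V) (i : nat) : {set V} :=
  match i with
  | 0 => set0
  | i'.+1 => pass f k (threshold f k p i'.+1) (ord i'.+1) (S_after f k p ord i')
  end.

End Defs.

(* Main.v *)
Require Import Defs.
From HB Require Import structures.
From mathcomp Require Import all_boot all_order all_algebra.
Import Order.TTheory GRing.Theory Num.Theory.
Local Open Scope ring_scope.

Section Aux.
Variables (R : realFieldType) (V : finType) (f : {set V} -> R).

Lemma pass_sub k t (s : seq V) (S0 : {set V}) : S0 \subset pass f k t s S0.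
Proof.
elim: s S0 => [|e s IH] S0 //=.
apply: subset_trans (IH _).
by case: ifP => _ //; apply: subsetUr.
Qed.

Lemma pass_prop k t (s : seq V) (S0 : {set V}) : submodular f ->
  (#|pass f k t s S0| < k)%N ->
  forall e, e \in s -> e \notin pass f k t s S0 -> marg f e (pass f k t s S0) < t.
Proof.
move=> Hsub; elim: s S0 => [|e s IH] S0 //= Hk x.
rewrite inE => /orP [/eqP -> | Hx]; last exact: IH.
set T := (if _ then _ else _).
move=> Hn.
have HT : T \subset pass f k t s T by apply: pass_sub.
rewrite /T; case: ifP => Hc.
  exfalso; move: Hn; rewrite /T Hc.
  have : e \in e |: S0 by rewrite setU11.
  by move=> He /negP; apply; apply: (subsetP (pass_sub k t s (e |: S0))).
move: HT Hk Hn; rewrite /T Hc => HT Hk Hn.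
have HS0 : (#|S0| < k)%N.
  by apply: leq_ltn_trans (subset_leq_card HT) Hk.
move: Hc; rewrite HS0 /= => /negbT; rewrite -ltNge => Hlt.
exact: le_lt_trans (Hsub _ _ _ HT Hn) Hlt.
Qed.

Lemma seq_bound (s : seq V) (S : {set V}) t : monotone f -> submodular f ->
  (forall e, marg f e S <= t) ->
  f ([set x in s] :|: S) <= f S + (size s)%:R * t.
Proof.
move=> Hm Hs Ht.
have t0 : forall e : V, 0 <= t.
  move=> e; apply: le_trans _ (Ht e); rewrite /marg subr_ge0.
  by apply: Hm; apply: subsetUr.
elim: s => [|e s IH] /=.
  by rewrite mul0r addr0; rewrite le_eqVlt; apply/orP; left; apply/eqP; congr f; apply/setP => x; rewrite !inE.
set A := [set x in s] :|: S.
have -> : [set x in e :: s] :|: S = e |: A.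
  by apply/setP => x; rewrite !inE orbA.
have step : marg f e A <= t.
  case: (boolP (e \in A)) => He.
    rewrite /marg; have -> : e |: A = A by apply/setUidPr; rewrite sub1set.
    by rewrite subrr; apply: t0 e.
  apply: le_trans (Ht e).
  by apply: Hs => //; apply: subsetUr.
rewrite /marg in step.
rewrite -(subrK (f A) (f (e |: A))); apply: le_trans (lerD step IH) _.
by rewrite -addn1 natrD mulrDl mul1r addrCA [t + _]addrC.
Qed.

End Aux.

Theorem mainTheorem17 (R : realFieldType) (V : finType) (f : {set V} -> R)
  (k p : nat) (ord : nat -> seq V) :
  nonneg_fun f -> normalized f -> monotone f -> submodular f ->
  (0 < k)%N -> (k <= #|V|)%N -> (1 <= p)%N ->
  (forall i, perm_eq (ord i) (enum V)) ->
  forall i : nat, (1 <= i <= p)%N ->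
  (#|S_after f k p ord i| < k)%N ->
  (1 - (p%:R / (p.+1)%:R) ^+ i) * OPT f k <= f (S_after f k p ord i).
Proof.
move=> Hnn Hnorm Hm Hs Hk _ _ Hord [|i] // _ /=.
set t := threshold f k p i.+1.
set Si := pass f k t (ord i.+1) (S_after f k p ord i) => HSi.
set q := (p%:R / (p.+1)%:R) ^+ i.+1.
have OPT0 : 0 <= OPT f k.
  by apply: (big_ind (fun x => 0 <= x)) => // x y; rewrite le_max => ->.
have q0 : 0 <= q by rewrite /q exprn_ge0 // divr_ge0.
have kpos : (0 : R) < k%:R by rewrite ltr0n.
have t0 : 0 <= t by rewrite /t /threshold mulr_ge0 // divr_ge0 // ltW.
have Hmarg : forall e, marg f e Si <= t.
  move=> e; case: (boolP (e \in Si)) => He.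
    rewrite /marg; have -> : e |: Si = Si by apply/setUidPr; rewrite sub1set.
    by rewrite subrr.
  apply/ltW; apply: pass_prop => //.
  by rewrite (perm_mem (Hord _)) mem_enum.
have kt : k%:R * t = q * OPT f k.
  rewrite /t /threshold -/q mulrCA; congr (_ * _); rewrite mulrCA mulfV ?mulr1 //; exact: lt0r_neq0.
have HO : forall O : {set V}, (#|O| <= k)%N -> f O <= f Si + q * OPT f k.
  move=> O HO.
  apply: le_trans (Hm O ([set x in enum O] :|: Si) _) _.
    by rewrite set_enum subsetUl.
  apply: le_trans (@seq_bound R V f (enum O) Si t Hm Hs Hmarg) _.
  rewrite lerD2l -kt ler_wpM2r // ler_nat -cardE //.
have : OPT f k <= f Si + q * OPT f k.
  apply: (big_ind (fun x => x <= f Si + q * OPT f k)).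
  - by apply: addr_ge0 => //; apply: mulr_ge0.
  - by move=> x y ? ?; rewrite ge_max; apply/andP.
  - by move=> O HO'; apply: HO.
by rewrite mulrBl mul1r lerBlDr.
Qed.
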